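(* Let $\Gamma$ be a non-abelian torsion-free group and $\rho=(\rho_L,\rho_R):\Gamma\to G\times G$ an admissible representation such that $\rho_L,\rho_R$ are not conjugate in $G$. Let $J\subset\overline\Lambda(\rho)$ be a nonempty $\rho(\Gamma)$-invariant subset. Then $\overline E(J)=\overline E(\rho)$.
   Context: $E=\mathbb R^4$ with a quadratic form $Q$ of signature $(2,2)$ and bilinear form $\langle\cdot|\cdot\rangle$; anti-de Sitter space is $\{Q=-1\}$, $S(E)$ the sphere of rays, $P(E)$ the projective space; $\overline{\mathbb{ADS}}$ is the projection of $\{Q<0\}$ to $P(E)$, identified with $G=\mathrm{PSL}(2,\mathbb R)$, and $\overline{\mathrm{Ein}}_2$ the projection of the null cone $\{Q=0\}$. $G\times G\cong\mathrm{SO}_0(2,2)$ acts projectively ($g\mapsto g_Lgg_R^{-1}$). $\overline\Lambda(\rho)$ is the closure in $P(E)$ of the set of attractive fixed points in $P(E)$ of elements of $\rho(\Gamma)$; it lies in $\overline{\mathrm{Ein}}_2$. It is the projection of $\Lambda(\rho)\cup-\Lambda(\rho)$, where $\Lambda(\rho)\subset S(E)$ is a closed subset (one of the two minimal closed invariant subsets of $S(E)$) projecting injectively onto $\overline\Lambda(\rho)$; thus each $[p]\in\overline\Lambda(\rho)$ has a distinguished representative ray $p\in\Lambda(\rho)$ (take any vector representative of this ray). For $J\subset\overline\Lambda(\rho)$, $\overline E(J)$ is the interior of $\{[x]\in\overline{\mathbb{ADS}}:\ \langle x|p\rangle\langle x|q\rangle>0$ for all $[p],[q]\in J$ with $p,q\in\Lambda(\rho)\}$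 (the sign is independent of the representative $x$), and $\overline E(\rho)=\overline E(\overline\Lambda(\rho))$. Admissible: faithful, discrete image, and lifting to a representation into $\mathrm{Isom}_0(\widetilde{\mathrm{AdS}})=(\widetilde G\times\widetilde G)/\mathcal Z$ preserving a generic closed achronal subset of $\widehat{\mathrm{Ein}}_2$ (the universal cover of the conformal boundary) with at least two points; generic means not containing two points $x,\delta(x)$, $\delta$ the generator of the center of $\widetilde G$, and achronal means no two distinct points are causally related. *)

(* Defs.v *)
From Stdlib Require Import Reals ZArith.
Open Scope R_scope.

(* A vector of E is a 2x2 matrix [[m11, m12], [m21, m22]]. *)
Record M2 := mkM2 { m11 : R; m12 : R; m21 : R; m22 : R }.

Definition zeroM : M2 := mkM2 0 0 0 0.
Definition scal (s : R) (A : M2) : M2 :=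
  mkM2 (s * m11 A) (s * m12 A) (s * m21 A) (s * m22 A).
Definition mmul (A B : M2) : M2 :=
  mkM2 (m11 A * m11 B + m12 A * m21 B) (m11 A * m12 B + m12 A * m22 B)
       (m21 A * m11 B + m22 A * m21 B) (m21 A * m12 B + m22 A * m22 B).
Definition det (A : M2) : R := m11 A * m22 A - m12 A * m21 A.
(* adjugate: the inverse of A when det A = 1 *)
Definition adj (A : M2) : M2 := mkM2 (m22 A) (- m12 A) (- m21 A) (m11 A).
Definition trM (A : M2) : M2 := mkM2 (m11 A) (m21 A) (m12 A) (m22 A).
Definition idM : M2 := mkM2 1 0 0 1.

(* The quadratic form Q = - det, of signature (2,2); AdS = {Q = -1} = SL(2,R). *)
Definition Q (x : M2) : R := m12 x * m21 x - m11 x * m22 x.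
(* its polar bilinear form <x|y> *)
Definition bil (x y : M2) : R :=
  (m12 x * m21 y + m21 x * m12 y - m11 x * m22 y - m22 x * m11 y) / 2.

(* Auxiliary Euclidean structure, only used to define the topology. *)
Definition dot (x y : M2) : R :=
  m11 x * m11 y + m12 x * m12 y + m21 x * m21 y + m22 x * m22 y.
(* squared sine of the angle between the lines spanned by nonzero x, y:
   a metric inducing the usual topology of P(E) *)
Definition sin2 (x y : M2) : R := 1 - (dot x y) ^ 2 / (dot x x * dot y y).

(* Elements of G are represented by matrices of determinant 1, modulo sign. *)
Definition psl_eq (A B : M2) : Prop := A = B \/ A = scal (-1) B.
Definition dist2 (A B : M2) : R :=
  (m11 A - m11 B) ^ 2 + (m12 A - m12 B) ^ 2 + (m21 A - m21 B) ^ 2 + (m22 A - m22 B) ^ 2.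
Definition distG (A B : M2) : R := Rmin (dist2 A B) (dist2 A (scal (-1) B)).

(* Projective action of (g_L, g_R) in G x G on E: x |-> g_L x g_R^{-1}. *)
Definition act (A B x : M2) : M2 := mmul (mmul A x) (adj B).

Record is_group (G : Type) (mul : G -> G -> G) (inv : G -> G) (one : G) : Prop := {
  grp_assoc : forall a b c, mul a (mul b c) = mul (mul a b) c;
  grp_id_l : forall a, mul one a = a;
  grp_inv_l : forall a, mul (inv a) a = one }.

Fixpoint gpow {G : Type} (mul : G -> G -> G) (one : G) (g : G) (n : nat) : G :=
  match n with O => one | S k => mul g (gpow mul one g k) end.

Definition non_abelian {G : Type} (mul : G -> G -> G) : Prop :=
  exists g h, mul g h <> mul h g.
Definition torsion_free {G : Type} (mul : G -> G -> G) (one : G) : Prop :=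
  forall g n, (1 <= n)%nat -> gpow mul one g n = one -> g = one.

Definition is_rep {G : Type} (mul : G -> G -> G) (rhoL rhoR : G -> M2) : Prop :=
  (forall g, det (rhoL g) = 1 /\ det (rhoR g) = 1) /\
  (forall g h, psl_eq (rhoL (mul g h)) (mmul (rhoL g) (rhoL h)) /\
               psl_eq (rhoR (mul g h)) (mmul (rhoR g) (rhoR h))).

Definition faithful {G : Type} (one : G) (rhoL rhoR : G -> M2) : Prop :=
  forall g, psl_eq (rhoL g) idM -> psl_eq (rhoR g) idM -> g = one.

Definition discrete_image {G : Type} (rhoL rhoR : G -> M2) : Prop :=
  forall g, exists eps, 0 < eps /\ forall h,
    distG (rhoL h) (rhoL g) + distG (rhoR h) (rhoR g) < eps ->
    psl_eq (rhoL h) (rhoL g) /\ psl_eq (rhoR h) (rhoR g).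

Definition conjugate_in_G {G : Type} (rhoL rhoR : G -> M2) : Prop :=
  exists C, det C = 1 /\ forall g, psl_eq (rhoR g) (mmul (mmul C (rhoL g)) (adj C)).

(* The projective line RP^1 is parametrised by the angle theta (period PI),
   theta |-> line of (cos theta, sin theta).  An element of the universal cover
   of G over A in G is a continuous lift f : R -> R of the projective action of A. *)
Definition lifts (A : M2) (f : R -> R) : Prop :=
  continuity f /\
  forall t, exists l, l <> 0 /\
    m11 A * cos t + m12 A * sin t = l * cos (f t) /\
    m21 A * cos t + m22 A * sin t = l * sin (f t).

(* Ein_2 = projectivised null cone = rank-one matrices u v^T, i.e. RP^1 x RP^1;
   rk1 t p is the rank one matrix e(t) e(p)^T. *)
Definition rk1 (t p : R) : M2 :=
  mkM2 (cos t * cos p) (cos t * sin p) (sin t * cos p) (sin t * sin p).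
(* (g_L, g_R) maps u v^T to (g_L u)(g_R^{-T} v)^T, so the universal cover
   R x R of Ein_2 is acted on by (f_L, f_R) with f_L a lift of g_L and f_R a
   lift of g_R^{-T} = trM (adj g_R).  The centre generator delta of tilde G is
   the translation by PI; Z = <(delta,delta)> (translation by (PI,PI)). *)

Definition Z_invariant (P : R -> R -> Prop) : Prop :=
  forall t p, P t p <-> P (t + PI) (p + PI).
Definition closedR2 (P : R -> R -> Prop) : Prop :=
  forall t p, (forall eps, 0 < eps -> exists t' p', P t' p' /\
      (t - t') ^ 2 + (p - p') ^ 2 < eps) -> P t p.
(* Q restricted to Ein_2 is (a positive multiple of) dt dp; timelike = Q < 0.
   Achronal: no two points are related by a timelike curve. *)
Definition achronal (P : R -> R -> Prop) : Prop :=
  forall t p t' p', P t p -> P t' p' -> 0 <= (t - t') * (p - p').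
Definition generic (P : R -> R -> Prop) : Prop :=
  forall t p, P t p -> ~ P (t + PI) p.
Definition two_points (P : R -> R -> Prop) : Prop :=
  exists t p t' p', P t p /\ P t' p' /\
    ~ (exists n : Z, t' = t + IZR n * PI /\ p' = p + IZR n * PI).

(* (lL, lR) is a lift of rho to a representation into (tilde G x tilde G)/Z
   preserving a generic closed achronal subset of hat Ein_2 with >= 2 points *)
Definition admissible_lift {G : Type} (mul : G -> G -> G) (rhoL rhoR : G -> M2)
  (lL lR : G -> R -> R) : Prop :=
  (forall g, lifts (rhoL g) (lL g)) /\
  (forall g, lifts (trM (adj (rhoR g))) (lR g)) /\
  (forall g h, exists n : Z, forall t,
      lL (mul g h) t = lL g (lL h t) + IZR n * PI /\
      lR (mul g h) t = lR g (lR h t) + IZR n * PI) /\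
  exists P : R -> R -> Prop,
    Z_invariant P /\ closedR2 P /\ achronal P /\ generic P /\ two_points P /\
    forall g t p, P t p -> P (lL g t) (lR g p).

Definition admissible {G : Type} (mul : G -> G -> G) (one : G) (rhoL rhoR : G -> M2) : Prop :=
  faithful one rhoL rhoR /\ discrete_image rhoL rhoR /\
  exists lL lR, admissible_lift mul rhoL rhoR lL lR.

(* The linear action on E (and on the sphere of rays S(E)) of the element of
   SO_0(2,2) determined by the lift: sign s such that s * rho(g) acts on the
   lifted Ein_2 compatibly with (lL g, lR g). *)
Definition hat_sign {G : Type} (rhoL rhoR : G -> M2) (lL lR : G -> R -> R) (g : G) (s : R) : Prop :=
  (s = 1 \/ s = -1) /\
  forall t p, exists l, 0 < l /\
    scal s (act (rhoL g) (rhoR g) (rk1 t p)) = scal l (rk1 (lL g t) (lR g p)).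

Definition attractive_fp (A B y : M2) : Prop :=
  y <> zeroM /\ (exists l, act A B y = scal l y) /\
  exists eps, 0 < eps /\ forall z, z <> zeroM -> sin2 z y < eps ->
    forall d, 0 < d -> exists N, forall n, (N <= n)%nat ->
      sin2 (Nat.iter n (act A B) z) y < d.

(* closure in P(E) of the set of attractive fixed points of elements of rho(Gamma);
   a subset of P(E) is a scale invariant predicate on nonzero vectors *)
Definition Lbar {G : Type} (rhoL rhoR : G -> M2) (x : M2) : Prop :=
  x <> zeroM /\ forall eps, 0 < eps -> exists g y,
    attractive_fp (rhoL g) (rhoR g) y /\ sin2 x y < eps.

(* Lam is a subset of S(E) (positive-scale invariant predicate on nonzero vectors) *)
Definition ray_set (K : M2 -> Prop) : Prop :=
  (forall x, K x -> x <> zeroM) /\ (forall x l, 0 < l -> K x -> K (scal l x)).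
Definition ray_closed (K : M2 -> Prop) : Prop :=
  forall x, x <> zeroM ->
    (forall eps, 0 < eps -> exists y, K y /\ 0 < dot x y /\ sin2 x y < eps) -> K x.
Definition hat_invariant {G : Type} (rhoL rhoR : G -> M2) (lL lR : G -> R -> R)
  (K : M2 -> Prop) : Prop :=
  forall g s x, hat_sign rhoL rhoR lL lR g s -> K x -> K (scal s (act (rhoL g) (rhoR g) x)).

(* Lam is a minimal nonempty closed invariant subset of S(E) projecting
   injectively onto Lbar *)
Definition is_Lambda {G : Type} (rhoL rhoR : G -> M2) (lL lR : G -> R -> R)
  (Lam : M2 -> Prop) : Prop :=
  ray_set Lam /\ ray_closed Lam /\ (exists x, Lam x) /\ hat_invariant rhoL rhoR lL lR Lam /\
  (forall K : M2 -> Prop, ray_set K -> ray_closed K -> (exists x, K x) ->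
     hat_invariant rhoL rhoR lL lR K -> (forall x, K x -> Lam x) ->
     forall x, Lam x -> K x) /\
  (forall x, x <> zeroM -> (Lbar rhoL rhoR x <-> Lam x \/ Lam (scal (-1) x))) /\
  (forall x, ~ (Lam x /\ Lam (scal (-1) x))).

Definition E_pre (Lam J : M2 -> Prop) (x : M2) : Prop :=
  Q x < 0 /\ forall p q, Lam p -> Lam q -> J p -> J q -> 0 < bil x p * bil x q.
Definition Ebar (Lam J : M2 -> Prop) (x : M2) : Prop :=
  x <> zeroM /\ exists eps, 0 < eps /\
    forall y, y <> zeroM -> sin2 x y < eps -> E_pre Lam J y.

Definition proj_set (J : M2 -> Prop) : Prop :=
  (forall x, J x -> x <> zeroM) /\ (forall x l, l <> 0 -> J x -> J (scal l x)).

(* Main.v *)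
Require Import Defs.
From Stdlib Require Import Reals ZArith Lra List.
Open Scope R_scope.

Definition addM (A B : M2) : M2 :=
  mkM2 (m11 A + m11 B) (m12 A + m12 B) (m21 A + m21 B) (m22 A + m22 B).

Lemma act_lin A B a b p q :
  act A B (addM (scal a p) (scal b q)) = addM (scal a (act A B p)) (scal b (act A B q)).
Proof. destruct A, B, p, q; unfold act, mmul, adj, addM, scal; simpl; f_equal; ring. Qed.

Lemma scal_lin s a b p q :
  scal s (addM (scal a p) (scal b q)) = addM (scal a (scal s p)) (scal b (scal s q)).
Proof. destruct p, q; unfold addM, scal; simpl; f_equal; ring. Qed.

Lemma act_scal A B l p : act A B (scal l p) = scal l (act A B p).
Proof. destruct A, B, p; unfold act, mmul, adj, scal; simpl; f_equal; ring. Qed.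

Lemma scal_scal s l p : scal s (scal l p) = scal l (scal s p).
Proof. destruct p; unfold scal; simpl; f_equal; ring. Qed.

Lemma bil_scal z l p : bil z (scal l p) = l * bil z p.
Proof. destruct z, p; unfold bil, scal; simpl; field. Qed.

Lemma bil_lin2 z a b p q : bil z (addM (scal a p) (scal b q)) = a * bil z p + b * bil z q.
Proof. destruct z, p, q; unfold bil, scal, addM; simpl; field. Qed.

Lemma bil_lin1 y t v p : bil (addM y (scal t v)) p = bil y p + t * bil v p.
Proof. destruct y, v, p; unfold bil, scal, addM; simpl; field. Qed.

Lemma dot_lin w a b p q : dot w (addM (scal a p) (scal b q)) = a * dot w p + b * dot w q.
Proof. destruct w, p, q; unfold dot, scal, addM; simpl; ring. Qed.

Lemma bil_zero p : bil zeroM p = 0.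
Proof. destruct p; unfold bil, zeroM; simpl; field. Qed.

Section App.
Variable Gam : Type.
Variables rhoL rhoR : Gam -> M2.

Definition appL (l : list (Gam * R)) (p : M2) : M2 :=
  fold_right (fun gs v => scal (snd gs) (act (rhoL (fst gs)) (rhoR (fst gs)) v)) p l.

Lemma appL_lin l a b p q :
  appL l (addM (scal a p) (scal b q)) = addM (scal a (appL l p)) (scal b (appL l q)).
Proof.
  induction l as [|[g s] l IH]; simpl; auto.
  rewrite IH, act_lin, scal_lin; auto.
Qed.

Lemma appL_scal l c p : appL l (scal c p) = scal c (appL l p).
Proof.
  induction l as [|[g s] l IH]; simpl; auto.
  rewrite IH, act_scal, scal_scal; auto.
Qed.
End App.

Definition linF (h : M2 -> R) : Prop :=
  forall a b p q, h (addM (scal a p) (scal b q)) = a * h p + b * h q.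

Lemma lin_repr h : linF h -> forall p,
  h p = dot (mkM2 (h (mkM2 1 0 0 0)) (h (mkM2 0 1 0 0)) (h (mkM2 0 0 1 0)) (h (mkM2 0 0 0 1))) p.
Proof.
  intros Hl p.
  assert (E : p = addM (scal (m11 p) (mkM2 1 0 0 0)) (scal 1 (addM (scal (m12 p) (mkM2 0 1 0 0))
     (scal 1 (addM (scal (m21 p) (mkM2 0 0 1 0)) (scal (m22 p) (mkM2 0 0 0 1))))))).
  { destruct p; unfold addM, scal; simpl; f_equal; ring. }
  rewrite E at 1. rewrite !Hl. unfold dot; simpl. ring.
Qed.

Lemma dot_pos x : x <> zeroM -> 0 < dot x x.
Proof.
  intros Hx. destruct x as [a b c d]; unfold dot; simpl.
  apply Rnot_le_lt; intro H. apply Hx.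
  pose proof (Rle_0_sqr a); pose proof (Rle_0_sqr b); pose proof (Rle_0_sqr c); pose proof (Rle_0_sqr d).
  unfold Rsqr in *.
  assert (a*a = 0) by lra. assert (b*b = 0) by lra. assert (c*c = 0) by lra. assert (d*d=0) by lra.
  assert (a = 0) by (destruct (Rmult_integral a a); auto).
  assert (b = 0) by (destruct (Rmult_integral b b); auto).
  assert (c = 0) by (destruct (Rmult_integral c c); auto).
  assert (d = 0) by (destruct (Rmult_integral d d); auto).
  subst; reflexivity.
Qed.

Lemma CS a b : (dot a b)^2 <= dot a a * dot b b.
Proof.
  destruct a as [a1 a2 a3 a4], b as [b1 b2 b3 b4]; unfold dot; simpl.
  assert (E : (a1 * a1 + a2 * a2 + a3 * a3 + a4 * a4) * (b1 * b1 + b2 * b2 + b3 * b3 + b4 * b4)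
   - (a1 * b1 + a2 * b2 + a3 * b3 + a4 * b4) ^ 2 =
   (a1*b2-a2*b1)^2 + (a1*b3-a3*b1)^2 + (a1*b4-a4*b1)^2 + (a2*b3-a3*b2)^2
   + (a2*b4-a4*b2)^2 + (a3*b4-a4*b3)^2) by ring.
  pose proof (pow2_ge_0 (a1*b2-a2*b1)); pose proof (pow2_ge_0 (a1*b3-a3*b1));
  pose proof (pow2_ge_0 (a1*b4-a4*b1)); pose proof (pow2_ge_0 (a2*b3-a3*b2));
  pose proof (pow2_ge_0 (a2*b4-a4*b2)); pose proof (pow2_ge_0 (a3*b4-a4*b3)).
  lra.
Qed.

Lemma dot_vv a x y : dot (addM (scal a y) (scal (-1) x)) (addM (scal a y) (scal (-1) x)) =
  a^2 * dot y y - 2*a*dot x y + dot x x.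
Proof. destruct x, y; unfold dot, addM, scal; simpl; ring. Qed.

Lemma closure_dot w x : x <> zeroM ->
  (forall eps, 0 < eps -> exists y, 0 <= dot w y /\ 0 < dot x y /\ Defs.sin2 x y < eps) ->
  0 <= dot w x.
Proof.
  intros Hx H.
  destruct (Rle_or_lt 0 (dot w x)) as [Hle|Hlt]; auto. exfalso.
  set (k := - dot w x). assert (Hk : 0 < k) by (unfold k; lra).
  pose proof (dot_pos x Hx) as Hnx. set (nx := dot x x) in *.
  set (W := dot w w). assert (HW : 0 <= W) by (unfold W; destruct w; unfold dot; simpl; nra).
  set (E2 := k^2 / (4 * (W+1) * nx)).
  assert (HE2 : 0 < E2) by (unfold E2; apply Rdiv_lt_0_compat; nra).
  destruct (H (Rmin (1/2) E2)) as [y [Hwy [Hd Hs]]].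
  { apply Rmin_pos; lra. }
  pose proof (Rmin_l (1/2) E2). pose proof (Rmin_r (1/2) E2).
  set (d := dot x y) in *. set (ny := dot y y).
  pose proof (CS x y) as Hcs. fold d nx ny in Hcs.
  assert (Hny : 0 < ny) by nra.
  unfold Defs.sin2 in Hs. fold d nx ny in Hs.
  set (r := d^2 / (nx * ny)) in *.
  assert (Hr : d^2 = r * (nx * ny)) by (unfold r; field; nra).
  assert (Hr1 : 1/2 < r) by lra.
  assert (Hr2 : 1 - r < E2) by lra.
  set (v := addM (scal (nx/d) y) (scal (-1) x)).
  assert (Hwv : dot w v = nx/d * dot w y + k) by (unfold v; rewrite dot_lin; unfold k; ring).
  assert (Hvv : dot v v = nx * (1 - r) / r).
  { unfold v. rewrite dot_vv. fold d nx ny.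
    assert (d <> 0) by lra. assert (r <> 0) by lra.
    transitivity (nx^2 * ny / d^2 - nx). { field; auto. }
    
    rewrite Hr. field. split; [lra|split; lra]. }
  pose proof (CS w v) as Hcs2. fold W in Hcs2. rewrite Hwv, Hvv in Hcs2.
  assert (Hpos : 0 <= nx / d * dot w y) by (apply Rmult_le_pos; auto; apply Rlt_le; apply Rdiv_lt_0_compat; lra).
  assert (Hk2 : k^2 <= W * (nx * (1 - r) / r)).
  { assert (k^2 <= (nx/d*dot w y + k)^2) by nra. lra. }
  assert (Hr0 : r <= 1).
  { unfold r. apply (Rmult_le_reg_r (nx*ny)); [nra|]. unfold Rdiv; rewrite Rmult_assoc, Rinv_l by nra. lra. }
  assert (Hq : (1 - r) / r <= 2 * (1 - r)).
  { assert (Hi : / r < 2).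
    { apply (Rmult_lt_reg_r r); [lra|]. rewrite Rinv_l by lra. lra. }
    unfold Rdiv. rewrite (Rmult_comm 2). apply Rmult_le_compat_l; lra. }
  assert (Hk3 : k^2 <= W * nx * (2 * E2)).
  { assert (nx * (1 - r) / r = nx * ((1-r)/r)) by (unfold Rdiv; ring).
    assert (0 <= 1 - r) by nra.
    assert (W * (nx * ((1-r)/r)) <= W * nx * (2 * E2)).
    { rewrite <- Rmult_assoc. apply Rmult_le_compat_l; [nra|]. lra. }
    nra. }
  assert (HE : W * nx * (2 * E2) = k^2 * (W / (2*(W+1)))) by (unfold E2; field; lra).
  assert (W / (2*(W+1)) < 1).
  { apply (Rmult_lt_reg_r (2*(W+1))); [lra|]. unfold Rdiv; rewrite Rmult_assoc, Rinv_l by lra. lra. }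
  assert (0 < k^2) by (apply pow_lt; lra).
  assert (k^2 * (W/(2*(W+1))) < k^2 * 1) by (apply Rmult_lt_compat_l; auto).
  lra.
Qed.

Lemma sin2_line x y v t : Defs.sin2 x (addM y (scal t v)) =
  1 - (dot x y + t * dot x v)^2 / (dot x x * (dot y y + 2*t*dot y v + t*t*dot v v)).
Proof.
  unfold Defs.sin2. f_equal. f_equal.
  - f_equal. destruct x, y, v; unfold dot, addM, scal; simpl; ring.
  - f_equal. destruct y, v; unfold dot, addM, scal; simpl; ring.
Qed.

Lemma bil_nondeg p : p <> zeroM -> exists v, bil v p <> 0.
Proof.
  intros Hp. destruct p as [a b c d].
  destruct (Req_dec a 0); [destruct (Req_dec b 0); [destruct (Req_dec c 0); [destruct (Req_dec d 0)|]|]|].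
  - subst; exfalso; apply Hp; reflexivity.
  - exists (mkM2 1 0 0 0); unfold bil; simpl. intro; apply H2; lra.
  - exists (mkM2 0 1 0 0); unfold bil; simpl. intro; apply H1; lra.
  - exists (mkM2 0 0 1 0); unfold bil; simpl. intro; apply H0; lra.
  - exists (mkM2 0 0 0 1); unfold bil; simpl. intro; apply H; lra.
Qed.

Lemma strict x eps y p p0 : x <> zeroM -> y <> zeroM -> Defs.sin2 x y < eps -> p <> zeroM ->
  bil y p0 <> 0 ->
  (forall z, z <> zeroM -> Defs.sin2 x z < eps -> 0 <= bil z p * bil z p0) ->
  0 < bil y p * bil y p0.
Proof.
  intros Hx Hy Hs Hp Hc H.
  pose proof (H y Hy Hs) as H0.
  destruct (Rle_lt_or_eq_dec _ _ H0) as [Hlt|Heq]; auto. exfalso.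
  assert (Hyp : bil y p = 0).
  { symmetry in Heq. destruct (Rmult_integral _ _ Heq); auto; contradiction. }
  destruct (bil_nondeg p Hp) as [v Hv].
  set (b := bil v p) in *. set (c := bil y p0) in *. set (e := bil v p0).
  assert (Hnx := dot_pos x Hx). assert (Hny := dot_pos y Hy).
  assert (Hcont : continuity_pt (fun t => 1 - (dot x y + t * dot x v)^2 /
     (dot x x * (dot y y + 2*t*dot y v + t*t*dot v v))) 0).
  { reg. replace (dot x x * (dot y y + 2 * 0 * dot y v + 0 * 0 * dot v v)) with (dot x x * dot y y) by ring.
    apply Rmult_integral_contrapositive; split; lra. }
  destruct (Hcont (eps - Defs.sin2 x y)) as [alp [Halp Hf]]; [lra|].
  assert (Hac : 0 < Rabs c) by (apply Rabs_pos_lt; auto).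
  pose proof (Rabs_pos e) as Hae.
  set (tau := Rmin (alp/2) (Rabs c / (2*(Rabs e + 1)))).
  assert (Htau : 0 < tau) by (apply Rmin_pos; [lra|apply Rdiv_lt_0_compat; lra]).
  assert (Htau1 : tau < alp) by (pose proof (Rmin_l (alp/2) (Rabs c / (2*(Rabs e + 1)))); unfold tau; lra).
  assert (Htau2 : tau * Rabs e <= Rabs c / 2).
  { pose proof (Rmin_r (alp/2) (Rabs c / (2*(Rabs e + 1)))) as Hm. fold tau in Hm.
    apply Rle_trans with (Rabs c / (2*(Rabs e + 1)) * Rabs e).
    - apply Rmult_le_compat_r; auto.
    - apply (Rmult_le_reg_r (2*(Rabs e + 1))); [lra|].
      replace (Rabs c / (2 * (Rabs e + 1)) * Rabs e * (2 * (Rabs e + 1))) with (Rabs c * Rabs e) by (field; lra).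
      nra. }
  set (t := if Rlt_dec 0 (b*c) then - tau else tau).
  assert (Htabs : Rabs t = tau).
  { unfold t; destruct (Rlt_dec 0 (b*c)); [rewrite Rabs_Ropp|]; apply Rabs_right; lra. }
  assert (Htbc : t * b * c < 0).
  { unfold t; destruct (Rlt_dec 0 (b*c)) as [h|h].
    - nra.
    - assert (b*c <> 0) by (apply Rmult_integral_contrapositive; split; auto).
      assert (b*c < 0) by lra. nra. }
  assert (Hce : 0 < c * (c + t*e)).
  { assert (Hab : Rabs (t*c*e) <= c^2/2).
    { rewrite !Rabs_mult, Htabs. rewrite <- (pow2_abs c). nra. }
    assert (- Rabs (t*c*e) <= t*c*e) by (rewrite <- Rabs_Ropp; apply Rle_trans with (- - (t*c*e)); [apply Ropp_le_contravar, Rle_abs| lra]).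
    assert (0 < c^2) by (replace (c^2) with (Rsqr c) by (unfold Rsqr; ring); apply Rsqr_pos_lt; auto).
    nra. }
  set (z := addM y (scal t v)).
  assert (Hzc : bil z p0 = c + t*e) by (unfold z; rewrite bil_lin1; auto).
  assert (Hzp : bil z p = t * b) by (unfold z; rewrite bil_lin1, Hyp; unfold b; ring).
  assert (Hz0 : z <> zeroM).
  { intro Hz. rewrite Hz, bil_zero in Hzc. rewrite <- Hzc in Hce. lra. }
  assert (Hzs : Defs.sin2 x z < eps).
  { assert (Ht0 : t <> 0) by (intro; rewrite H1, Rabs_R0 in Htabs; lra).
    specialize (Hf t). simpl in Hf. unfold R_dist in Hf.
    rewrite Rminus_0_r, Htabs in Hf.
    assert (Hd : D_x no_cond 0 t) by (split; [exact I| auto]).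
    specialize (Hf (conj Hd Htau1)).
    unfold z. rewrite sin2_line.
    replace (Defs.sin2 x y) with (1 - (dot x y + 0 * dot x v)^2 / (dot x x * (dot y y + 2*0*dot y v + 0*0*dot v v))) in *.
    2:{ rewrite <- sin2_line. f_equal. destruct y, v; unfold addM, scal; simpl; f_equal; ring. }
    pose proof (Rle_abs ((1 - (dot x y + t * dot x v) ^ 2 / (dot x x * (dot y y + 2 * t * dot y v + t * t * dot v v))) -
     (1 - (dot x y + 0 * dot x v) ^ 2 / (dot x x * (dot y y + 2 * 0 * dot y v + 0 * 0 * dot v v))))).
    simpl in *. lra. }
  pose proof (H z Hz0 Hzs) as Hz. rewrite Hzc, Hzp in Hz.
  assert (Hprod : (t*b*(c+t*e)) * (c*(c+t*e)) = (t*b*c) * (c+t*e)^2) by ring.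
  assert (0 < (c+t*e)^2) by (replace ((c+t*e)^2) with (Rsqr (c+t*e)) by (unfold Rsqr; ring); apply Rsqr_pos_lt; intro h; rewrite h in Hce; lra).
  nra.
Qed.

Theorem mainTheorem8
  (Gam : Type) (mul : Gam -> Gam -> Gam) (inv : Gam -> Gam) (one : Gam)
  (Hgrp : is_group Gam mul inv one) (Hna : non_abelian mul) (Htf : torsion_free mul one)
  (rhoL rhoR : Gam -> M2) (Hrep : is_rep mul rhoL rhoR)
  (Hfaith : faithful one rhoL rhoR) (Hdisc : discrete_image rhoL rhoR)
  (lL lR : Gam -> R -> R) (Hlift : admissible_lift mul rhoL rhoR lL lR)
  (Hnc : ~ conjugate_in_G rhoL rhoR)
  (Lam : M2 -> Prop) (HLam : is_Lambda rhoL rhoR lL lR Lam)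
  (J : M2 -> Prop) (HJ : proj_set J)
  (HJsub : forall x, J x -> Lbar rhoL rhoR x)
  (HJne : exists x, J x)
  (HJinv : forall g x, J x -> J (act (rhoL g) (rhoR g) x)) :
  forall x, x <> zeroM -> (Ebar Lam J x <-> Ebar Lam (Lbar rhoL rhoR) x).
Proof.
  intros x Hx. destruct HLam as [Hrs [Hrc [Hne [Hinv [Hmin [Hiff Hanti]]]]]].
  split.
  2:{ intros [_ [eps [Heps HU]]]. split; auto. exists eps; split; auto.
      intros y Hy Hsy. destruct (HU y Hy Hsy) as [HQ HP]. split; [exact HQ|].
      intros p q Lp Lq Jp Jq. apply HP; auto. }
  intros [_ [eps [Heps HU]]]. split; auto. exists eps; split; auto.
  assert (Hp0 : exists p0, J p0 /\ Lam p0).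
  { destruct HJne as [x0 Hx0]. assert (x0 <> zeroM) by (apply (proj1 HJ); auto).
    destruct (proj1 (Hiff x0 H) (HJsub x0 Hx0)) as [L|L].
    - exists x0; auto.
    - exists (scal (-1) x0); split; auto. apply (proj2 HJ); auto. lra. }
  destruct Hp0 as [p0 [Jp0 Lp0]].
  assert (JL : forall l p, J p -> Lam p ->
     Forall (fun gs => hat_sign rhoL rhoR lL lR (fst gs) (snd gs)) l ->
     J (appL Gam rhoL rhoR l p) /\ Lam (appL Gam rhoL rhoR l p)).
  { induction l as [|[g s] l IH]; intros p Jp Lp Hl; simpl; auto.
    inversion Hl; subst. destruct (IH p Jp Lp H2) as [J1 L1]. simpl in H1.
    split.
    - apply (proj2 HJ); [destruct (proj1 H1); lra|]. apply HJinv; auto.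
    - apply (Hinv g s); auto. }
  set (K := fun p => Lam p /\ forall l, Forall (fun gs => hat_sign rhoL rhoR lL lR (fst gs) (snd gs)) l ->
     forall z, z <> zeroM -> Defs.sin2 x z < eps -> 0 <= bil z (appL Gam rhoL rhoR l p) * bil z p0).
  assert (HK : forall p, Lam p -> K p).
  { apply Hmin.
    - split.
      + intros q [Lq _]. apply (proj1 Hrs); auto.
      + intros q l Hl [Lq Hq]. split; [apply (proj2 Hrs); auto|].
        intros l' Hl' z Hz Hsz. rewrite appL_scal, bil_scal.
        specialize (Hq l' Hl' z Hz Hsz). rewrite Rmult_assoc. apply Rmult_le_pos; lra.
    - intros q Hq Happ. split.
      + apply Hrc; auto. intros e He. destruct (Happ e He) as [y [[Ly _] Hy]]. exists y; auto.
      + intros l Hl z Hz Hsz.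
        set (h := fun p => bil z (appL Gam rhoL rhoR l p) * bil z p0).
        assert (Hlin : linF h).
        { intros a b p q'. unfold h. rewrite appL_lin, bil_lin2. ring. }
        change (0 <= h q). rewrite (lin_repr h Hlin). apply closure_dot; auto.
        intros e He. destruct (Happ e He) as [y [[Ly Ky] [Hd Hs]]]. exists y.
        rewrite <- (lin_repr h Hlin). unfold h. split; auto.
    - exists p0. split; auto. intros l Hl z Hz Hsz.
      destruct (JL l p0 Jp0 Lp0 Hl) as [J1 L1].
      destruct (HU z Hz Hsz) as [_ HP]. apply Rlt_le. apply HP; auto.
    - intros g s q Hgs [Lq Hq]. split; [apply (Hinv g s); auto|].
      intros l Hl z Hz Hsz.
      replace (appL Gam rhoL rhoR l (scal s (act (rhoL g) (rhoR g) q)))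
        with (appL Gam rhoL rhoR (l ++ (g, s) :: nil) q) by (unfold appL; rewrite fold_right_app; reflexivity).
      apply Hq; auto. apply Forall_app; split; auto.
    - intros q [Lq _]; auto. }
  intros y Hy Hsy. destruct (HU y Hy Hsy) as [HQ HP]. split; [exact HQ|].
  intros p q Lp Lq _ _.
  assert (Hc : bil y p0 <> 0).
  { intro h. specialize (HP p0 p0 Lp0 Lp0 Jp0 Jp0). rewrite h in HP. lra. }
  assert (Hstr : forall r, Lam r -> 0 < bil y r * bil y p0).
  { intros r Lr. destruct (HK r Lr) as [_ Hr].
    apply (strict x eps); auto. apply (proj1 Hrs); auto.
    intros z Hz Hsz. apply (Hr nil (Forall_nil _) z Hz Hsz). }
  pose proof (Hstr p Lp). pose proof (Hstr q Lq).
  assert (Hpr : (bil y p * bil y q) * (bil y p0 * bil y p0) = (bil y p * bil y p0) * (bil y q * bil y p0)) by ring.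
  assert (0 < bil y p0 * bil y p0) by (apply Rsqr_pos_lt; auto).
  apply (Rmult_lt_reg_r (bil y p0 * bil y p0)); auto. rewrite Rmult_0_l, Hpr.
  apply Rmult_lt_0_compat; auto.
Qed.
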